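(* If $C$ is a semiprime $k$-coalgebra with finite coradical filtration (i.e. $C=C_n$ for some $n$), then $C$ is cosemisimple (i.e. $C=\mathrm{Soc}\,C=C_0$). *)

(* Defs.v *)
(* MathComp has no tensor
   product, so elements of C (x) C are represented by finite formal sums
   (seq (C * C)) of simple tensors, and (in)equalities / memberships in tensor
   products are expressed through their universal property: by quantifying
   over all bilinear (resp. trilinear) maps into all k-modules M. *)
From HB Require Import structures.
From mathcomp Require Import all_boot all_order all_algebra.
Set Implicit Arguments. Unset Strict Implicit. Unset Printing Implicit Defensive.
Import GRing.Theory.
Local Open Scope ring_scope.

Section Coalgebra.
Variables (k : fieldType) (C : lmodType k).

Definition bilin (M : lmodType k) (b : C -> C -> M) : Prop :=
  (forall a x y z, b (a *: x + y) z = a *: b x z + b y z) /\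
  (forall a x y z, b z (a *: x + y) = a *: b z x + b z y).

Definition trilin (M : lmodType k) (t : C -> C -> C -> M) : Prop :=
  (forall a x y u v, t (a *: x + y) u v = a *: t x u v + t y u v) /\
  (forall a x y u v, t u (a *: x + y) v = a *: t u x v + t u y v) /\
  (forall a x y u v, t u v (a *: x + y) = a *: t u v x + t u v y).

(* the image of the formal sum  sum_i x_i (x) y_i  under the linear map
   C (x) C -> M induced by the bilinear map b *)
Definition teval (M : lmodType k) (b : C -> C -> M) (s : seq (C * C)) : M :=
  \sum_(p <- s) b p.1 p.2.

Definition subspace (D : C -> Prop) : Prop :=
  D 0 /\ forall a x y, D x -> D y -> D (a *: x + y).

Variables (Delta : C -> seq (C * C)) (eps : C -> k).

Definition is_coalgebra : Prop :=
  (* Delta : C -> C (x) C is linear *)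
  (forall (M : lmodType k) (b : C -> C -> M), bilin b ->
     forall a x y, teval b (Delta (a *: x + y))
                   = a *: teval b (Delta x) + teval b (Delta y)) /\
  (forall a x y, eps (a *: x + y) = a * eps x + eps y) /\
  (* coassociativity: (Delta (x) id) Delta = (id (x) Delta) Delta in C(x)C(x)C *)
  (forall (M : lmodType k) (t : C -> C -> C -> M), trilin t ->
     forall c, \sum_(p <- Delta c) \sum_(q <- Delta p.1) t q.1 q.2 p.2
             = \sum_(p <- Delta c) \sum_(q <- Delta p.2) t p.1 q.1 q.2) /\
  (forall c, \sum_(p <- Delta c) eps p.1 *: p.2 = c) /\
  (forall c, \sum_(p <- Delta c) eps p.2 *: p.1 = c).

(* s lies in the subspace X (x) Y of C (x) C *)
Definition tensor_in (X Y : C -> Prop) (s : seq (C * C)) : Prop :=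
  forall (M : lmodType k) (b : C -> C -> M), bilin b ->
    (forall x y, X x -> Y y -> b x y = 0) -> teval b s = 0.

Definition subcoalgebra (D : C -> Prop) : Prop :=
  subspace D /\ forall d, D d -> tensor_in D D (Delta d).

(* wedge:  X /\ Y = Delta^{-1}(X (x) C + C (x) Y) *)
Definition wedge (X Y : C -> Prop) (c : C) : Prop :=
  forall (M : lmodType k) (b : C -> C -> M), bilin b ->
    (forall x y, X x -> b x y = 0) -> (forall x y, Y y -> b x y = 0) ->
    teval b (Delta c) = 0.

Definition simple_subcoalgebra (D : C -> Prop) : Prop :=
  subcoalgebra D /\ (exists d, D d /\ d <> 0) /\
  forall E, subcoalgebra E -> (forall x, E x -> D x) ->
    (forall x, E x -> x = 0) \/ (forall x, D x -> E x).

Definition coradical (c : C) : Prop :=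
  exists s : seq C,
    (forall x, x \in s -> exists D, simple_subcoalgebra D /\ D x) /\
    c = \sum_(x <- s) x.

Fixpoint corad_filt (n : nat) : C -> Prop :=
  match n with
  | 0 => coradical
  | n'.+1 => wedge (corad_filt n') coradical
  end.

Definition semiprime : Prop :=
  forall D, subcoalgebra D -> (forall c, wedge D D c) -> forall c, D c.

Definition cosemisimple : Prop := forall c, coradical c.

End Coalgebra.

(* Main.v *)
Require Import Defs.
From HB Require Import structures.
From mathcomp Require Import all_boot all_order all_algebra.
From Stdlib Require Import ClassicalEpsilon FunctionalExtensionality PropExtensionality Classical.


Section Zorn.
Variable T : Type.
Variable Phi : (T -> Prop) -> Prop.
Variable base : T -> Prop.
Definition incl (A B : T -> Prop) := forall x, A x -> B x.
Definition zunion (F : (T -> Prop) -> Prop) : T -> Prop :=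
  fun x => base x \/ exists S, F S /\ S x.
Hypothesis HPhi : forall F : (T -> Prop) -> Prop, (forall S, F S -> Phi S) ->
  (forall S1 S2, F S1 -> F S2 -> incl S1 S2 \/ incl S2 S1) -> Phi (zunion F).

Lemma set_ext (A B : T -> Prop) : incl A B -> incl B A -> A = B.
Proof.
intros h1 h2; apply functional_extensionality; intro x;
apply propositional_extensionality; split; auto.
Qed.

Definition zsucc (S : T -> Prop) : T -> Prop :=
  match excluded_middle_informative
          (exists S', Phi S' /\ incl S S' /\ ~ incl S' S) with
  | left H => proj1_sig (constructive_indefinite_description _ H)
  | right _ => S
  end.

Lemma zsucc_incl S : incl S (zsucc S).
Proof.
unfold zsucc; destruct excluded_middle_informative as [H|H].
- destruct (constructive_indefinite_description _ H) as [S' HS]; simpl; destruct HS as [_ [h _]]; exact h.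
- intros x h; exact h.
Qed.

Lemma zsucc_strict S : (exists S', Phi S' /\ incl S S' /\ ~ incl S' S) ->
  ~ incl (zsucc S) S.
Proof.
intro H0; unfold zsucc; destruct excluded_middle_informative as [H|H].
- destruct (constructive_indefinite_description _ H) as [S' HS]; simpl; destruct HS as [_ [_ h]]; exact h.
- contradiction.
Qed.

Inductive tower : (T -> Prop) -> Prop :=
| tw_succ S : tower S -> tower (zsucc S)
| tw_sup (F : (T -> Prop) -> Prop) : (forall S, F S -> tower S) -> tower (zunion F).

Lemma tower_base S : tower S -> incl base S.
Proof.
induction 1 as [S _ IH|F _ IH].
- intros x h; apply zsucc_incl, IH, h.
- intros x h; left; exact h.
Qed.

Definition zext S := forall U, tower U -> incl U S -> ~ incl S U -> incl (zsucc U) S.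

Lemma ext_a S : tower S -> zext S -> forall U, tower U -> incl U S \/ incl (zsucc S) U.
Proof.
intros tS eS U tU; induction tU as [U tU IH|F tF IH].
- destruct IH as [h|h].
  + destruct (classic (incl S U)) as [h2|h2].
    * right. rewrite (set_ext _ _ h h2). intros x hx; exact hx.
    * left; apply eS; auto.
  + right; intros x hx; apply zsucc_incl, h, hx.
- destruct (classic (exists S0, F S0 /\ incl (zsucc S) S0)) as [[S0 [h1 h2]]|h].
  + right; intros x hx; right; exists S0; auto.
  + left; intros x [hx|[S0 [h1 h2]]].
    * apply (tower_base _ tS), hx.
    * destruct (IH S0 h1) as [h3|h3]; [apply h3, h2|].
      exfalso; apply h; exists S0; auto.
Qed.

Lemma all_ext S : tower S -> zext S.
Proof.
induction 1 as [S tS IH|F tF IH].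
- intros U tU h1 h2.
  destruct (ext_a S tS IH U tU) as [h|h]; [|contradiction].
  destruct (classic (incl S U)) as [h3|h3].
  + rewrite (set_ext _ _ h h3); intros x hx; exact hx.
  + intros x hx; apply zsucc_incl, (IH U tU h h3), hx.
- intros U tU h1 h2.
  assert (HS0 : exists S0, F S0 /\ incl U S0).
  { apply NNPP; intro hn; apply h2; intros x [hx|[S0 [hS0 hx]]].
    - apply (tower_base _ tU), hx.
    - destruct (ext_a S0 (tF S0 hS0) (IH S0 hS0) U tU) as [h|h].
      + exfalso; apply hn; exists S0; auto.
      + apply h, zsucc_incl, hx. }
  destruct HS0 as [S0 [hS0 hU]].
  destruct (classic (incl S0 U)) as [h3|h3].
  + rewrite (set_ext _ _ hU h3).
    destruct (classic (exists S1, F S1 /\ incl (zsucc S0) S1)) as [[S1 [a b]]|hn].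
    * intros x hx; right; exists S1; auto.
    * exfalso; apply h2; intros x [hx|[S1 [hS1 hx]]].
      -- apply (tower_base _ tU), hx.
      -- destruct (ext_a S0 (tF S0 hS0) (IH S0 hS0) S1 (tF S1 hS1)) as [h|h].
         ++ apply h3, h, hx.
         ++ exfalso; apply hn; exists S1; auto.
  + intros x hx; right; exists S0; split; auto.
    apply (IH S0 hS0 U tU hU h3), hx.
Qed.

Lemma tower_chain S U : tower S -> tower U -> incl U S \/ incl S U.
Proof.
intros tS tU; destruct (ext_a S tS (all_ext S tS) U tU) as [h|h]; auto.
right; intros x hx; apply h, zsucc_incl, hx.
Qed.

Lemma tower_Phi S : tower S -> Phi S.
Proof.
induction 1 as [S tS IH|F tF IH].
- unfold zsucc; destruct excluded_middle_informative as [H|H]; auto.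
  destruct (constructive_indefinite_description _ H) as [S' HS]; simpl; destruct HS as [h _]; exact h.
- apply HPhi; auto. intros S1 S2 h1 h2; apply tower_chain; auto.
Qed.

Lemma zorn : exists S, Phi S /\ incl base S /\
  forall S', Phi S' -> incl S S' -> incl S' S.
Proof.
assert (tT : tower (zunion tower)) by (apply tw_sup; auto).
exists (zunion tower); split; [apply tower_Phi, tT|split].
- intros x hx; left; exact hx.
- intros S' hS' hinc; apply NNPP; intro hn.
  apply (zsucc_strict (zunion tower)).
  + exists S'; auto.
  + intros x hx; right; exists (zsucc (zunion tower)); split; auto.
    apply tw_succ, tT.
Qed.
End Zorn.
Arguments incl {T}.
Arguments zunion {T}.
Arguments zorn {T Phi base}.

Set Implicit Arguments. Unset Strict Implicit. Unset Printing Implicit Defensive.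
Import GRing.Theory.
Local Open Scope ring_scope.

Section Lin.
Variables (k : fieldType) (C : lmodType k).

Lemma bilin0l (M : lmodType k) (b : C -> C -> M) : bilin b -> forall z, b 0 z = 0.
Proof.
move=> [h1 h2] z; have e := h1 1 0 0 z; rewrite !scale1r addr0 in e.
have : b 0 z + b 0 z - b 0 z = b 0 z - b 0 z by rewrite -e.
by rewrite addrK subrr.
Qed.

Lemma bilin0r (M : lmodType k) (b : C -> C -> M) : bilin b -> forall z, b z 0 = 0.
Proof.
move=> [h1 h2] z; have e := h2 1 0 0 z; rewrite !scale1r addr0 in e.
have : b z 0 + b z 0 - b z 0 = b z 0 - b z 0 by rewrite -e.
by rewrite addrK subrr.
Qed.

Lemma bilinDl (M : lmodType k) (b : C -> C -> M) : bilin b ->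
  forall x y z, b (x + y) z = b x z + b y z.
Proof. by move=> [h1 h2] x y z; rewrite -{1}[x]scale1r h1 scale1r. Qed.

Lemma bilinDr (M : lmodType k) (b : C -> C -> M) : bilin b ->
  forall x y z, b z (x + y) = b z x + b z y.
Proof. by move=> [h1 h2] x y z; rewrite -{1}[x]scale1r h2 scale1r. Qed.

Lemma bilinZl (M : lmodType k) (b : C -> C -> M) : bilin b ->
  forall a x z, b (a *: x) z = a *: b x z.
Proof. by move=> hb a x z; rewrite -[a *: x]addr0 (proj1 hb) bilin0l // addr0. Qed.

Lemma bilinZr (M : lmodType k) (b : C -> C -> M) : bilin b ->
  forall a x z, b z (a *: x) = a *: b z x.
Proof. by move=> hb a x z; rewrite -[a *: x]addr0 (proj2 hb) bilin0r // addr0. Qed.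

Lemma teval_nil (M : lmodType k) (b : C -> C -> M) : teval b [::] = 0.
Proof. by rewrite /teval big_nil. Qed.

Lemma teval_cons (M : lmodType k) (b : C -> C -> M) p s :
  teval b (p :: s) = b p.1 p.2 + teval b s.
Proof. by rewrite /teval big_cons. Qed.

Lemma teval_cat (M : lmodType k) (b : C -> C -> M) s1 s2 :
  teval b (s1 ++ s2) = teval b s1 + teval b s2.
Proof. by rewrite /teval big_cat. Qed.

Lemma teval_ext (M : lmodType k) (b b' : C -> C -> M) s :
  (forall x y, b x y = b' x y) -> teval b s = teval b' s.
Proof. by move=> h; apply: eq_bigr => p _; apply: h. Qed.

Lemma teval_lin (M : lmodType k) (b1 b2 : C -> C -> M) a s :
  teval (fun x y => a *: b1 x y + b2 x y) s = a *: teval b1 s + teval b2 s.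
Proof.
elim: s => [|p s IH]; first by rewrite !teval_nil scaler0 addr0.
rewrite !teval_cons IH scalerDr.
by rewrite -!addrA; congr (_ + _); rewrite addrCA.
Qed.

Lemma teval_scale (M : lmodType k) (b : C -> C -> M) a s :
  teval (fun x y => a *: b x y) s = a *: teval b s.
Proof.
elim: s => [|p s IH]; first by rewrite !teval_nil scaler0.
by rewrite !teval_cons IH scalerDr.
Qed.

Lemma teval0 (M : lmodType k) (b : C -> C -> M) s :
  (forall p, List.In p s -> b p.1 p.2 = 0) -> teval b s = 0.
Proof.
elim: s => [|p s IH] h; first by rewrite teval_nil.
rewrite teval_cons h /=; last by left.
by rewrite add0r IH // => q hq; apply: h; right.
Qed.

Lemma teval_rot (M : lmodType k) (b : C -> C -> M) s1 p s2 :
  teval b (s1 ++ p :: s2) = teval b (p :: s1 ++ s2).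
Proof. by rewrite !teval_cat !teval_cons teval_cat addrCA. Qed.

Definition teq (s s' : seq (C * C)) := forall (M : lmodType k) (b : C -> C -> M),
  bilin b -> teval b s = teval b s'.

Fixpoint lspan (l : seq C) : C -> Prop :=
  match l with
  | [::] => fun x => x = 0
  | y :: l' => fun x => exists c z, lspan l' z /\ x = c *: y + z
  end.

Lemma lspan0 l : lspan l 0.
Proof. elim: l => [|y l IH] //=; exists 0, 0; by rewrite scale0r addr0. Qed.

Lemma lspan_mem l x : List.In x l -> lspan l x.
Proof.
elim: l => [|y l IH] //= [->|h].
- by exists 1, 0; rewrite scale1r addr0; split => //; apply: lspan0.
- by exists 0, x; rewrite scale0r add0r; split => //; apply: IH.
Qed.

Lemma lspan_lin l a x y : lspan l x -> lspan l y -> lspan l (a *: x + y).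
Proof.
elim: l x y => [|z l IH] x y /=; first by move=> -> ->; rewrite scaler0 addr0.
move=> [c1 [z1 [h1 ->]]] [c2 [z2 [h2 ->]]].
exists (a * c1 + c2), (a *: z1 + z2); split; first by apply: IH.
rewrite scalerDr scalerA scalerDl -!addrA; congr (_ + _).
by rewrite addrCA.
Qed.

Lemma red_fst (r : seq (C * C)) a bb : lspan (map fst r) a ->
  exists r', size r' = size r /\ teq r' ((a, bb) :: r).
Proof.
elim: r a => [|[x y] r IH] a /=.
- move=> ->; exists [::]; split => // M b hb.
  by rewrite teval_cons teval_nil /= bilin0l // addr0.
- move=> [c [z [hz ->]]]; have [r0 [hs he]] := IH z hz.
  exists ((x, y + c *: bb) :: r0); split; first by rewrite /= hs.
  move=> M b hb; rewrite !teval_cons /= he // teval_cons /=.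
  rewrite bilinDr // bilinDl // bilinZl // bilinZr //.
  by rewrite -!addrA addrCA; congr (_ + _); rewrite addrCA.
Qed.

Lemma red_snd (r : seq (C * C)) a bb : lspan (map snd r) bb ->
  exists r', size r' = size r /\ teq r' ((a, bb) :: r).
Proof.
elim: r bb => [|[x y] r IH] bb /=.
- move=> ->; exists [::]; split => // M b hb.
  by rewrite teval_cons teval_nil /= bilin0r // addr0.
- move=> [c [z [hz ->]]]; have [r0 [hs he]] := IH z hz.
  exists ((x + c *: a, y) :: r0); split; first by rewrite /= hs.
  move=> M b hb; rewrite !teval_cons /= he // teval_cons /=.
  rewrite bilinDl // bilinDr // bilinZl // bilinZr //.
  by rewrite -!addrA addrCA; congr (_ + _); rewrite addrCA.
Qed.

Lemma minimal_rep s : exists s', teq s s' /\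
  forall s'', teq s s'' -> (size s' <= size s'')%N.
Proof.
suff H : forall n s0, (size s0 <= n)%N -> teq s s0 -> exists s', teq s s' /\
  forall s'', teq s s'' -> (size s' <= size s'')%N.
  by apply: (H (size s) s) => // M b hb.
elim=> [|n IH] s0 hs he.
- exists s0; split => // s'' _; by rewrite (leq_trans hs).
- case: (classic (exists s1, teq s s1 /\ (size s1 < size s0)%N)).
  + move=> [s1 [h1 h2]]; apply: (IH s1) => //.
    by rewrite -ltnS (leq_trans h2).
  + move=> hn; exists s0; split => // s'' h''.
    case: (leqP (size s0) (size s'')) => // hlt.
    by exfalso; apply: hn; exists s''.
Qed.


Lemma sub_add (S : C -> Prop) : subspace S -> forall x y, S x -> S y -> S (x + y).
Proof. by move=> [h0 h] x y hx hy; rewrite -[x]scale1r; apply: h. Qed.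
Lemma sub_scale (S : C -> Prop) : subspace S -> forall c x, S x -> S (c *: x).
Proof. by move=> [h0 h] c x hx; rewrite -[c *: x]addr0; apply: h. Qed.
Lemma sub_opp (S : C -> Prop) : subspace S -> forall x, S x -> S (- x).
Proof. by move=> hS x hx; rewrite -scaleN1r; apply: sub_scale. Qed.

Lemma lspan_sub l : subspace (lspan l).
Proof. split; [exact: lspan0|move=> *; exact: lspan_lin]. Qed.

Lemma functional (L : seq C) a : ~ lspan L a -> exists f : C -> k,
  (forall c x y, f (c *: x + y) = c * f x + f y) /\ (f a = 1) /\
  (forall x, lspan L x -> f x = 0).
Proof.
move=> hna.
pose Phi (S : C -> Prop) := [/\ subspace S, ~ S a & forall x, lspan L x -> S x].
have HPhi : forall F : (C -> Prop) -> Prop, (forall S, F S -> Phi S) ->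
  (forall S1 S2, F S1 -> F S2 -> incl S1 S2 \/ incl S2 S1) ->
  Phi (zunion (lspan L) F).
  move=> F hF hch; split.
  - split; first by left; apply: lspan0.
    move=> c x y [hx|[S1 [h1 hx]]] [hy|[S2 [h2 hy]]].
    + by left; apply: lspan_lin.
    + have [hs _ hb] := hF _ h2; right; exists S2; split => //.
      by case: hs => _ hs; apply: hs => //; apply: hb.
    + have [hs _ hb] := hF _ h1; right; exists S1; split => //.
      by case: hs => _ hs; apply: hs => //; apply: hb.
    + case: (hch _ _ h1 h2) => hi.
      * have [[_ hs] _ _] := hF _ h2; right; exists S2; split => //.
        by apply: hs => //; apply: hi.
      * have [[_ hs] _ _] := hF _ h1; right; exists S1; split => //.
        by apply: hs => //; apply: hi.
  - by move=> [h|[S [hS h]]]; [apply: hna|have [_ hn _] := hF _ hS; apply: hn].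
  - by move=> x hx; left.
have [S [[hsub hSa hbase] [_ hmax]]] := zorn HPhi.
have hdec : forall v, exists c, exists s, S s /\ v = s + c *: a.
  move=> v; case: (classic (S v)) => hv.
    by exists 0, v; rewrite scale0r addr0.
  pose S' (x : C) := exists s c, S s /\ x = s + c *: v.
  have hS' : subspace S'.
    split; first by exists 0, 0; rewrite scale0r addr0; split => //; case: hsub.
    move=> c x y [s1 [c1 [h1 ->]]] [s2 [c2 [h2 ->]]].
    exists (c *: s1 + s2), (c * c1 + c2); split; first by case: hsub => _; apply.
    rewrite scalerDr scalerA scalerDl -!addrA; congr (_ + _); by rewrite addrCA.
  have hSS' : incl S S' by move=> x hx; exists x, 0; rewrite scale0r addr0.
  have : ~ Phi S'.
    move=> hP; apply: hv; apply: (hmax S' hP hSS').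
    by exists 0, 1; rewrite scale1r add0r; split => //; case: hsub.
  move=> hnP; have : S' a.
    apply: NNPP => hn; apply: hnP; split => // x hx; apply: hSS'; exact: hbase.
  move=> [s [c [hs hae]]].
  have hc : c != 0.
    apply/eqP => hc0; apply: hSa; by rewrite hae hc0 scale0r addr0.
  exists c^-1, (- (c^-1 *: s)); split; first by apply: sub_opp => //; apply: sub_scale.
  by rewrite hae scalerDr scalerA mulVf // scale1r addrA addNr add0r.
have huniq : forall s1 s2 c1 c2, S s1 -> S s2 -> s1 + c1 *: a = s2 + c2 *: a -> c1 = c2.
  move=> s1 s2 c1 c2 h1 h2 e; apply/eqP; case: eqP => // hne.
  have hc : c1 - c2 != 0 by rewrite subr_eq0; apply/eqP.
  exfalso; apply: hSa.
  have ea : a = (c1 - c2)^-1 *: (s2 - s1).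
    apply: (scalerI hc); rewrite scalerA divff // scale1r scalerBl.
    apply: (addrI s1); rewrite addrA e.
    by rewrite addrK addrCA subrr addr0.
  rewrite ea; apply: sub_scale => //; apply: sub_add => //; exact: sub_opp.
pose f (v : C) := proj1_sig (constructive_indefinite_description _ (hdec v)).
have hf : forall v, exists s, S s /\ v = s + f v *: a.
  by move=> v; rewrite /f; case: constructive_indefinite_description.
have hfu : forall v s c, S s -> v = s + c *: a -> f v = c.
  move=> v s c hs e; have [s' [hs' e']] := hf v.
  by apply: (huniq s' s) => //; rewrite -e'.
exists f; split; [|split].
- move=> c x y; have [sx [hx ex]] := hf x; have [sy [hy ey]] := hf y.
  apply: (hfu _ (c *: sx + sy)); first by case: hsub => _; apply.
  rewrite {1}ex {1}ey scalerDr scalerA scalerDl -!addrA; congr (_ + _).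
  by rewrite addrCA.
- by apply: (hfu _ 0); [case: hsub|rewrite add0r scale1r].
- move=> x hx; apply: (hfu _ x); first exact: hbase.
  by rewrite scale0r addr0.
Qed.

End Lin.

Section Co.
Variables (k : fieldType) (C : lmodType k).
Variables (Delta : C -> seq (C * C)) (eps : C -> k).
Hypothesis HC : is_coalgebra Delta eps.

Lemma DeltaL (M : lmodType k) (b : C -> C -> M) : bilin b ->
  forall a x y, teval b (Delta (a *: x + y)) = a *: teval b (Delta x) + teval b (Delta y).
Proof. by case: HC => h _; apply: h. Qed.

Lemma Delta0 (M : lmodType k) (b : C -> C -> M) : bilin b -> teval b (Delta 0) = 0.
Proof.
move=> hb; have e := DeltaL hb 1 0 0; rewrite scale1r addr0 scale1r in e.
have : teval b (Delta 0) + teval b (Delta 0) - teval b (Delta 0)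
  = teval b (Delta 0) - teval b (Delta 0) by rewrite -e.
by rewrite addrK subrr.
Qed.

Lemma DeltaD (M : lmodType k) (b : C -> C -> M) : bilin b ->
  forall x y, teval b (Delta (x + y)) = teval b (Delta x) + teval b (Delta y).
Proof. by move=> hb x y; rewrite -{1}[x]scale1r DeltaL // scale1r. Qed.

Lemma coassoc (M : lmodType k) (t : C -> C -> C -> M) : trilin t -> forall c,
  teval (fun u v => teval (fun q1 q2 => t q1 q2 v) (Delta u)) (Delta c)
  = teval (fun u v => teval (fun q1 q2 => t u q1 q2) (Delta v)) (Delta c).
Proof. by case: HC => _ [_ [h _]]; apply: h. Qed.

Lemma wedge_sub (X Y : C -> Prop) : subspace (wedge Delta X Y).
Proof.
split; first by move=> M b hb _ _; apply: Delta0.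
move=> a x y hx hy M b hb h1 h2; rewrite DeltaL // hx // hy //.
by rewrite scaler0 addr0.
Qed.

Lemma inmap_fst (s : seq (C * C)) p : List.In p s -> List.In p.1 (map fst s).
Proof. elim: s => [|q s IH] //= [->|h]; [by left|by right; apply: IH]. Qed.
Lemma inmap_snd (s : seq (C * C)) p : List.In p s -> List.In p.2 (map snd s).
Proof. elim: s => [|q s IH] //= [->|h]; [by left|by right; apply: IH]. Qed.

Lemma trilin1 (M : lmodType k) (f : C -> k) (be : C -> C -> M) :
  (forall c x y, f (c *: x + y) = c * f x + f y) -> bilin be ->
  trilin (fun u q r => f u *: be q r).
Proof.
move=> hf [b1 b2]; split; [|split].
- by move=> a x y u v; rewrite hf scalerDl scalerA.
- by move=> a x y u v; rewrite b1 scalerDr !scalerA mulrC.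
- by move=> a x y u v; rewrite b2 scalerDr !scalerA mulrC.
Qed.

Lemma trilin3 (M : lmodType k) (f : C -> k) (be : C -> C -> M) :
  (forall c x y, f (c *: x + y) = c * f x + f y) -> bilin be ->
  trilin (fun q r v => f v *: be q r).
Proof.
move=> hf [b1 b2]; split; [|split].
- by move=> a x y u v; rewrite b1 scalerDr !scalerA mulrC.
- by move=> a x y u v; rewrite b2 scalerDr !scalerA mulrC.
- by move=> a x y u v; rewrite hf scalerDl scalerA.
Qed.

Section Wedge.
Variables X Y : C -> Prop.
Hypotheses (hX : subcoalgebra Delta X) (hY : subcoalgebra Delta Y).

Lemma F1 (M : lmodType k) (t : C -> C -> C -> M) : trilin t ->
  (forall u x v, X x -> t u x v = 0) -> (forall u v y, Y y -> t u v y = 0) ->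
  forall w, wedge Delta X Y w ->
  teval (fun u v => teval (fun q1 q2 => t u q1 q2) (Delta v)) (Delta w) = 0.
Proof.
move=> ht tX tY w hw; rewrite -coassoc //.
have [t1 [t2 t3]] := ht.
apply: hw.
- split.
  + move=> a x y z; apply: DeltaL; split => *; [exact: t1|exact: t2].
  + move=> a x y z; rewrite (teval_ext _ (b' := fun q1 q2 =>
      a *: t q1 q2 x + t q1 q2 y)) ?teval_lin // => *; exact: t3.
- move=> x y hx; case: hX => _ h; apply: (h x hx).
  + split => *; [exact: t1|exact: t2].
  + by move=> x1 y1 _ hy1; apply: tX.
- by move=> x y hy; apply: teval0 => p _; apply: tY.
Qed.

Lemma F2 (M : lmodType k) (t : C -> C -> C -> M) : trilin t ->
  (forall x u v, X x -> t x u v = 0) -> (forall u y v, Y y -> t u y v = 0) ->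
  forall w, wedge Delta X Y w ->
  teval (fun u v => teval (fun q1 q2 => t q1 q2 v) (Delta u)) (Delta w) = 0.
Proof.
move=> ht tX tY w hw; rewrite coassoc //.
have [t1 [t2 t3]] := ht.
apply: hw.
- split.
  + move=> a x y z; rewrite (teval_ext _ (b' := fun q1 q2 =>
      a *: t x q1 q2 + t y q1 q2)) ?teval_lin // => *; exact: t1.
  + move=> a x y z; apply: DeltaL; split => *; [exact: t2|exact: t3].
- by move=> x y hx; apply: teval0 => p _; apply: tX.
- move=> x y hy; case: hY => _ h; apply: (h y hy).
  + split => *; [exact: t2|exact: t3].
  + by move=> x1 y1 hx1 _; apply: tY.
Qed.

Lemma wedge_subco : subcoalgebra Delta (wedge Delta X Y).
Proof.
split; first exact: wedge_sub.
move=> w hw.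
have [s' [hteq hmin]] := minimal_rep (Delta w).
have hall : forall p, List.In p s' -> wedge Delta X Y p.1 /\ wedge Delta X Y p.2.
  move=> [a bb] hp; have [s1 [s2 es]] := List.in_split _ _ hp.
  have hrot : teq s' ((a, bb) :: s1 ++ s2).
    by move=> M b hb; rewrite es teval_rot.
  split.
  - (* a in W, via a functional on second components *)
    have hnb : ~ lspan (map snd (s1 ++ s2)) bb.
      move=> hsp; have [r' [hs he]] := red_snd a hsp.
      have : (size s' <= size r')%N.
        apply: hmin => M b hb; rewrite hteq // hrot // he //.
      by rewrite hs es size_cat /= size_cat addnS ltnn.
    have [g [hg [hg1 hg0]]] := functional hnb.
    move=> M be hbe hbX hbY.
    pose ga u v := g v *: teval be (Delta u).
    have hga : bilin ga.
      split => x0 y0 z0 /=; rewrite /ga.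
      + by move=> ?; rewrite DeltaL // scalerDr !scalerA mulrC.
      + by move=> ?; rewrite hg scalerDl scalerA.
    have e1 : teval ga s' = teval be (Delta a).
      rewrite hrot // teval_cons /ga /= hg1 scale1r [X in _ + X]teval0 ?addr0 //.
      by move=> q hq; rewrite hg0 ?scale0r //; apply: lspan_mem; apply: inmap_snd.
    rewrite -e1 -hteq //.
    rewrite (teval_ext _ (b' := fun u v => teval (fun q1 q2 =>
               (fun q r v => g v *: be q r) q1 q2 v) (Delta u))).
      apply: F2.
      + exact: trilin3.
      + by move=> x0 u v hx0 /=; rewrite hbX // scaler0.
      + by move=> u y0 v hy0 /=; rewrite hbY // scaler0.
      + exact: hw.
    by move=> u v; rewrite /ga /= teval_scale.
  - have hna : ~ lspan (map fst (s1 ++ s2)) a.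
      move=> hsp; have [r' [hs he]] := red_fst bb hsp.
      have : (size s' <= size r')%N.
        apply: hmin => M b hb; rewrite hteq // hrot // he //.
      by rewrite hs es size_cat /= size_cat addnS ltnn.
    have [f [hf [hf1 hf0]]] := functional hna.
    move=> M be hbe hbX hbY.
    pose ga u v := f u *: teval be (Delta v).
    have hga : bilin ga.
      split => x0 y0 z0 /=; rewrite /ga.
      + by move=> ?; rewrite hf scalerDl scalerA.
      + by move=> ?; rewrite DeltaL // scalerDr !scalerA mulrC.
    have e1 : teval ga s' = teval be (Delta bb).
      rewrite hrot // teval_cons /ga /= hf1 scale1r [X in _ + X]teval0 ?addr0 //.
      by move=> q hq; rewrite hf0 ?scale0r //; apply: lspan_mem; apply: inmap_fst.
    rewrite -e1 -hteq //.
    rewrite (teval_ext _ (b' := fun u v => teval (fun q1 q2 =>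
               (fun u q r => f u *: be q r) u q1 q2) (Delta v))).
      apply: F1.
      + exact: trilin1.
      + by move=> u x0 v hx0 /=; rewrite hbX // scaler0.
      + by move=> u v y0 hy0 /=; rewrite hbY // scaler0.
      + exact: hw.
    by move=> u v; rewrite /ga /= teval_scale.
move=> M b hb hWW; rewrite hteq //; apply: teval0 => p hp.
by have [h1 h2] := hall p hp; apply: hWW.
Qed.

End Wedge.

Lemma corad_sub : subspace (coradical Delta).
Proof.
split.
  by exists [::]; split; [move=> x; rewrite in_nil|rewrite big_nil].
move=> a x y [sx [hx ->]] [sy [hy ->]].
exists (map (fun z => a *: z) sx ++ sy); split.
- move=> z; rewrite mem_cat => /orP [/mapP [z0 hz0 ->]|hz]; last exact: hy.
  have [D [hD hDz]] := hx z0 hz0; exists D; split => //.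
  by case: hD => [[hs _] _]; apply: sub_scale.
- by rewrite big_cat big_map scaler_sumr.
Qed.

Lemma simple_in_corad D x : simple_subcoalgebra Delta D -> D x -> coradical Delta x.
Proof.
move=> hD hx; exists [:: x]; split; last by rewrite big_cons big_nil addr0.
by move=> y; rewrite inE => /eqP ->; exists D.
Qed.

Lemma corad_subco : subcoalgebra Delta (coradical Delta).
Proof.
split; first exact: corad_sub.
move=> c [s [hs ->]] M b hb hbc.
elim: s hs => [|x s IH] hs; first by rewrite big_nil Delta0.
rewrite big_cons DeltaD // IH ?addr0; last by move=> y hy; apply: hs; rewrite inE hy orbT.
have [D [hD hDx]] := hs x (mem_head _ _).
case: (hD) => [[_ hsub] _]; apply: (hsub x hDx) => // u v hu hv.
by apply: hbc; apply: (simple_in_corad hD).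
Qed.

Lemma subco_wedge X Y : subcoalgebra Delta X -> forall x, X x -> wedge Delta X Y x.
Proof.
move=> [_ h] x hx M b hb h1 h2; apply: (h x hx) => // u v hu _; exact: h1.
Qed.

Lemma wedge_mono X Y Y' : (forall y, Y y -> Y' y) ->
  forall c, wedge Delta X Y c -> wedge Delta X Y' c.
Proof.
move=> hYY c hc M b hb h1 h2; apply: hc => // x y hy; apply: h2; exact: hYY.
Qed.

Lemma filt_subco m : subcoalgebra Delta (corad_filt Delta m).
Proof.
elim: m => [|m IH] /=; first exact: corad_subco.
by apply: wedge_subco => //; exact: corad_subco.
Qed.

Lemma corad_in_filt m : forall x, coradical Delta x -> corad_filt Delta m x.
Proof.
elim: m => [|m IH] //= x hx; apply: subco_wedge; first exact: filt_subco.
exact: IH.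
Qed.

End Co.

Theorem mainTheorem12 (k : fieldType) (C : lmodType k)
  (Delta : C -> seq (C * C)) (eps : C -> k) :
  is_coalgebra Delta eps ->
  semiprime Delta ->
  (exists n : nat, forall c : C, corad_filt Delta n c) ->
  cosemisimple Delta.
Proof.
move=> HC hsp [n hn].
suff H : forall j, (j <= n)%N -> forall c, corad_filt Delta (n - j) c.
  by move=> c; have := H n (leqnn n) c; rewrite subnn.
elim=> [|j IH] hj c; first by rewrite subn0.
have hm : (n - j = (n - j.+1).+1)%N by rewrite subnS prednK // subn_gt0.
apply: (hsp _ (filt_subco HC (n - j.+1))) => d.
apply: (wedge_mono (Y := coradical Delta)); first exact: corad_in_filt HC _.
by have := IH (ltnW hj) d; rewrite hm.
Qed.
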